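(* If $Z=\{x_{A_1,i_1},x_{A_2,i_2},\dots,x_{A_n,i_n}\}$ is a sufficient subset of $Q_n$, then $i_1,i_2,\dots,i_n$ are pairwise distinct.
   Context: Fix a field $k$. $Q_n$ is the associative unital $k$-algebra with generators $x_{A,i}$ ($A\subseteq\{1,\dots,n\}$, $i\notin A$), called pseudo-roots, subject to $x_{A\cup\{i\},j}+x_{A,i}=x_{A\cup\{j\},i}+x_{A,j}$ and $x_{A\cup\{i\},j}\,x_{A,i}=x_{A\cup\{j\},i}\,x_{A,j}$ for all $A$ and $i\ne j$, $i,j\notin A$. With $t$ central, $\mathcal P(t)=(t-x_{A_n,i_n})\cdots(t-x_{A_1,i_1})$ for an ordering $(i_1,\dots,i_n)$ of $\{1,\dots,n\}$ and $A_k=\{i_1,\dots,i_{k-1}\}$ (independent of the ordering). A set $Y$ of pseudo-roots is defining if $\mathcal P(t)=(t-y_n)\cdots(t-y_1)$ with all $y_k\in Y$. The pseudo-root $x_{A,i}$ corresponds to an edge with tail $A\cup\{i\}$ and head $A$. For distinct pseudo-roots $x_{A,i},x_{B,j}$ with $A=B$, $\xi$ is obtained from the ordered pair by the $u$-operation if $(x_{A,i}-x_{B,j})x_{A,i}=\xi(x_{A,i}-x_{B,j})$; for distinct pseudo-roots with $A\cup\{i\}=B\cup\{j\}$, $\eta$ is obtained by the $d$-operation if $(x_{A,i}-x_{B,j})\eta=x_{A,i}(x_{A,i}-x_{B,j})$. The $du$-envelope of a set $Z$ of pseudo-roots is the set of pseudo-roots obtained from $Z$ by successive $d$- and $u$-operations;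 $Z$ is sufficient if its $du$-envelope contains a defining set. *)

(* Defs.v *)
From HB Require Import structures.
From mathcomp Require Import all_boot all_order all_algebra.
Set Implicit Arguments. Unset Strict Implicit. Unset Printing Implicit Defensive.
Import GRing.Theory.
Local Open Scope ring_scope.

(* A label of a potential pseudo-root x_{A,i}: the pair (A, i), A ⊆ {1..n},
   i ∈ {1..n}, indices written 0..n-1 via 'I_n. *)
Definition pr (n : nat) : finType := ({set 'I_n} * 'I_n)%type.

(* (A, i) is a pseudo-root label iff i ∉ A. *)
Definition valid n (p : pr n) : bool := p.2 \notin p.1.

Definition Qrel (k : fieldType) n (R : algType k) (x : pr n -> R) : Prop :=
  forall (A : {set 'I_n}) (i j : 'I_n), i != j -> i \notin A -> j \notin A ->
    x (i |: A, j) + x (A, i) = x (j |: A, i) + x (A, j) /\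
    x (i |: A, j) * x (A, i) = x (j |: A, i) * x (A, j).

(* Q_n is the k-algebra presented by the generators x_{A,i} and the relations
   above; an identity between (noncommutative) polynomial expressions in the
   generators holds in Q_n iff it holds for every assignment satisfying Qrel
   in every k-algebra (universal property of the presented algebra). *)

Definition u_op (k : fieldType) n (p q xi : pr n) : Prop :=
  forall (R : algType k) (x : pr n -> R), Qrel x ->
    (x p - x q) * x p = x xi * (x p - x q).

Definition d_op (k : fieldType) n (p q eta : pr n) : Prop :=
  forall (R : algType k) (x : pr n -> R), Qrel x ->
    (x p - x q) * x eta = x p * (x p - x q).

Inductive du_env (k : fieldType) n (Z : {set pr n}) : pr n -> Prop :=
| env_base p : p \in Z -> du_env k Z p
| env_u p q xi : du_env k Z p -> du_env k Z q -> p != q -> p.1 = q.1 ->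
    valid xi -> u_op k p q xi -> du_env k Z xi
| env_d p q eta : du_env k Z p -> du_env k Z q -> p != q ->
    p.2 |: p.1 = q.2 |: q.1 ->
    valid eta -> d_op k p q eta -> du_env k Z eta.

Definition rprod (R : nzRingType) n (x : pr n -> R) (y : 'I_n -> pr n)
  : {poly R} :=
  \prod_(l <- rev (enum 'I_n)) ('X - (x (y l))%:P).

Definition std_order n (l : 'I_n) : pr n := ([set j : 'I_n | j < l]%N, l).

Definition Ppoly (R : nzRingType) n (x : pr n -> R) : {poly R} :=
  rprod x (@std_order n).

Definition defining (k : fieldType) n (Y : {set pr n}) : Prop :=
  exists y : 'I_n -> pr n, (forall l, y l \in Y) /\
    forall (R : algType k) (x : pr n -> R), Qrel x -> rprod x y = Ppoly x.

Definition sufficient (k : fieldType) n (Z : {set pr n}) : Prop :=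
  exists Y : {set pr n}, (forall p, p \in Y -> du_env k Z p) /\ defining k Y.

(* Main.v *)
Require Import Defs.
From HB Require Import structures.
From mathcomp Require Import all_boot all_order all_algebra.
Set Implicit Arguments. Unset Strict Implicit. Unset Printing Implicit Defensive.
Import GRing.Theory.
Local Open Scope ring_scope.

Section S.
Variables (k : fieldType) (n : nat).

Definition xm (p : pr n) : {poly k} := 'X^(nat_of_ord p.2).

Lemma xm_Qrel : Qrel xm.
Proof. by move=> A i j _ _ _; rewrite /xm /= addrC mulrC. Qed.

Lemma xm_inj (p q : pr n) : xm p = xm q -> p.2 = q.2.
Proof. rewrite /xm => e; have := congr1 (fun r : {poly k} => size r) e; rewrite /= !size_polyXn => -[] /val_inj //. Qed.

Lemma xm_sub_neq0 (p q : pr n) : p.2 != q.2 -> xm p - xm q != 0.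
Proof. by move=> H; rewrite subr_eq0; apply: contra H => /eqP /xm_inj ->. Qed.

Lemma pr_eq (p q : pr n) : p.1 = q.1 -> p.2 = q.2 -> p = q.
Proof. by case: p q => ? ? [? ?] /= -> ->. Qed.

Lemma env_valid (Z : {set pr n}) p : (forall q, q \in Z -> valid q) ->
  du_env k Z p -> valid p.
Proof. by move=> HZ; case=> //; apply: HZ. Qed.

Lemma env_snd (Z : {set pr n}) p : (forall q, q \in Z -> valid q) ->
  du_env k Z p -> exists2 q, q \in Z & p.2 = q.2.
Proof.
move=> HZ; elim=> {p}.
- by move=> p pZ; exists p.
- move=> p q xi _ [r rZ Hr] _ _ pq e1 _ Hu.
  have H := Hu _ _ xm_Qrel.
  have n2 : p.2 != q.2.
    by apply: contra pq => /eqP e2; apply/eqP; exact: pr_eq.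
  rewrite [LHS]mulrC in H; have := mulIf (xm_sub_neq0 n2) H; move/xm_inj => e; exists r; first done; by [rewrite -e | rewrite e].
- move=> p q eta Ep [r rZ Hr] Eq _ pq e1 _ Hd.
  have H := Hd _ _ xm_Qrel.
  have n2 : p.2 != q.2.
    apply: contra pq => /eqP e2; apply/eqP.
    have vp := env_valid HZ Ep; have vq := env_valid HZ Eq.
    have e3 : p.1 = q.1.
      by rewrite -(setU1K vp) e1 e2 setU1K // -e2.
    exact: pr_eq.
  rewrite mulrC in H.
  have := mulIf (xm_sub_neq0 n2) H; move/xm_inj => e; exists r; first done; by [rewrite -e | rewrite e].
Qed.

End S.

Theorem theorem1p4p5 (k : fieldType) (n : nat) (z : 'I_n -> pr n) :
  (forall l, valid (z l)) -> injective z ->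
  sufficient k [set z l | l in 'I_n] ->
  forall l m : 'I_n, l != m -> (z l).2 != (z m).2.
Proof.
move=> Hv _ [Y [HY [y [Hy Hdef]]]].
set Z := [set z l | l in 'I_n].
have HZ : forall q, q \in Z -> valid q by move=> q /imsetP [l _ ->].
have Hall : forall i : 'I_n, exists l, (z l).2 = i.
  move=> i.
  have E := Hdef _ _ (@xm_Qrel k n).
  have : (Ppoly (@xm k n)).[xm k (std_order i)] = 0.
    rewrite /Ppoly /rprod horner_prod; apply/eqP; rewrite prodf_seq_eq0.
    apply/hasP; exists i; first by rewrite mem_rev mem_enum.
    by rewrite /= !hornerE subrr eqxx.
  rewrite -E /rprod horner_prod => /eqP; rewrite prodf_seq_eq0 => /hasP [l _] /=.
  rewrite !hornerE subr_eq0 => /eqP /xm_inj /= ei.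
  have [q qZ eq] := env_snd HZ (HY _ (Hy l)).
  case/imsetP: qZ => l' _ ql; exists l'; by rewrite -ql -eq ei.
have inj : injective (fun l => (z l).2).
  have eS : [set (z l).2 | l in [set: 'I_n]] = [set: 'I_n].
    apply/setP=> i; rewrite inE; have [l el] := Hall i.
    by apply/imsetP; exists l; rewrite ?inE.
  have /imset_injP Hi : #|[set (z l).2 | l in [set: 'I_n]]| == #|[set: 'I_n]|.
    by rewrite eS.
  by move=> a b e; apply: Hi; rewrite ?inE.
move=> l m; apply: contra => /eqP e; apply/eqP; exact: (inj _ _ e).
Qed.
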